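(* On $\mathcal A_{\mathcal G}$ the metrics $\mathrm a_{\mathcal G}$ and $\mathrm d_{\mathcal G}$ induce the same topology.
   Context: $(X,\Sigma,\mu)$ is a separable Lebesgue space with a non-atomic probability measure $\mu$. $\mathcal A$ is the group of invertible measure-preserving transformations of $X$, two transformations being identified if they agree outside a null set. Fix a countable family $\{A_i\}_{i\in\mathbb N}\subset\Sigma$ that generates $\Sigma$ and is dense in $\Sigma$ (for every $A\in\Sigma$ and $\varepsilon>0$ there is $i$ with $\mu(A_i\triangle A)<\varepsilon$). For $T,S\in\mathcal A$ put $\mathrm d(T,S)=\sum_{i}2^{-i}\big(\mu(TA_i\triangle SA_i)+\mu(T^{-1}A_i\triangle S^{-1}A_i)\big)$ and $\mathrm a(T,S)=\sum_{i,j}2^{-(i+j)}|\mu(TA_i\cap A_j)-\mu(SA_i\cap A_j)|$. $\mathcal G$ is a Hausdorff locally compact group with a countable neighborhood base. Fix an at most countable family $\{K_i\}$ of compact subsets of $\mathcal G$ with nonempty interiors whose union contains a set generating $\mathcal G$. An action of $\mathcal G$ is a family $T=\{T^g\}_{g\in\mathcal G}\subset\mathcal A$ with $T^gT^h=T^{gh}$ for all $g,h$ and such that $g\mapsto\mu(T^gA\cap B)$ is continuous for all $A,B\in\Sigma$. $\mathcal A_{\mathcal G}$ is the set of all actions; for $T,S\in\mathcal A_{\mathcal G}$, $\mathrm d_{\mathcal G}(T,S)=\sum_i 2^{-i}\sup_{g\in K_i}\mathrm d(T^g,S^g)$ and $\mathrm a_{\mathcal G}(T,S)=\sum_i 2^{-i}\sup_{g\in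 K_i}\mathrm a(T^g,S^g)$. *)

(* Defs.v *)
From HB Require Import structures.
From mathcomp Require Import all_boot all_order all_algebra.
From mathcomp Require Import all_classical all_reals all_analysis.
Set Implicit Arguments. Unset Strict Implicit. Unset Printing Implicit Defensive.
Import Order.TTheory GRing.Theory Num.Theory.
Import numFieldNormedType.Exports.
Local Open Scope classical_set_scope.
Local Open Scope ring_scope.

Definition symdiff {T : Type} (A B : set T) : set T := (A `\` B) `|` (B `\` A).

Section MeasureSide.
Context {d : measure_display} {X : measurableType d} {R : realType}.

Definition nonatomic (mu : set X -> \bar R) : Prop :=
  forall A : set X, measurable A -> (0 < mu A)%E ->
    exists B : set X, [/\ measurable B, B `<=` A & (0 < mu B < mu A)%E].

(** (X, Sigma, mu) is isomorphic mod 0 to ([0,1], Lebesgue): a measurable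
    point map [f] pushing [mu] to Lebesgue measure on [0,1] and inducing
    a bijection of measure algebras (every measurable set is, up to a null
    set, the preimage of a Borel set). *)
Definition lebesgue_space_iso (mu : set X -> \bar R) : Prop :=
  exists f : X -> measurableTypeR R,
    [/\ measurable_fun setT f,
        (forall B : set (measurableTypeR R), measurable B ->
           mu (f @^-1` B) = lebesgue_measure (B `&` `[0%R, 1%R]%classic)) &
        (forall A : set X, measurable A ->
           exists B : set (measurableTypeR R),
             measurable B /\ mu (symdiff A (f @^-1` B)) = 0%E)].

Definition generating_dense_family (mu : set X -> \bar R) (Afam : nat -> set X) : Prop :=
  [/\ (forall i, measurable (Afam i)),
      @measurable d X = <<s range Afam >> &
      (forall (B : set X) (eps : R), measurable B -> 0 < eps ->
         exists i, (mu (symdiff (Afam i) B) < eps%:E)%E)].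

(** [T] is (a representative of) an element of the group \mathcal A:
    an invertible bimeasurable measure-preserving transformation of X. *)
Definition is_mpt (mu : set X -> \bar R) (T : X -> X) : Prop :=
  measurable_fun setT T /\
  exists Ti : X -> X,
    [/\ measurable_fun setT Ti, cancel T Ti, cancel Ti T &
        forall A : set X, measurable A -> mu (T @^-1` A) = mu A].

Definition dmet (mu : set X -> \bar R) (Afam : nat -> set X) (T S : X -> X) : \bar R :=
  \sum_(i <oo) (((2%:R : R)^-1 ^+ i.+1)%:E *
     (mu (symdiff (T @` Afam i) (S @` Afam i)) +
      mu (symdiff (T @^-1` Afam i) (S @^-1` Afam i))))%E.

Definition amet (mu : set X -> \bar R) (Afam : nat -> set X) (T S : X -> X) : \bar R :=
  \sum_(i <oo) \sum_(j <oo)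
     (((2%:R : R)^-1 ^+ (i.+1 + j.+1))%:E *
      `| mu (T @` Afam i `&` Afam j) - mu (S @` Afam i `&` Afam j) |)%E.

End MeasureSide.

Section GroupSide.
Context {G : topologicalType}.

Definition is_topological_group (mul : G -> G -> G) (inv : G -> G) (one : G) : Prop :=
  [/\ associative mul, left_id one mul, right_id one mul,
      (forall x, mul (inv x) x = one) & (forall x, mul x (inv x) = one)] /\
  (continuous (fun p : G * G => mul p.1 p.2) /\ continuous inv).

Definition is_locally_compact : Prop :=
  forall x : G, exists C : set G, compact C /\ nbhs x C.

Definition countable_nbhs_base : Prop :=
  forall x : G, exists B : nat -> set G,
    (forall n, nbhs x (B n)) /\ (forall U, nbhs x U -> exists n, B n `<=` U).

Definition generated_subgroup (mul : G -> G -> G) (inv : G -> G) (one : G)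
    (S : set G) : set G :=
  \bigcap_(H in [set H : set G | [/\ S `<=` H, H one,
        (forall x y, H x -> H y -> H (mul x y)) & (forall x, H x -> H (inv x))]]) H.

(** membership in an at most countable index range {0,...,N-1} (N = Some n)
    or all of nat (N = None) *)
Definition in_range (N : option nat) (i : nat) : bool :=
  if N is Some n then (i < n)%N else true.

Definition good_compact_family (mul : G -> G -> G) (inv : G -> G) (one : G)
    (N : option nat) (K : nat -> set G) : Prop :=
  (forall i, in_range N i -> compact (K i) /\ (K i)° !=set0) /\
  exists S : set G, S `<=` \bigcup_(i in [set i | in_range N i]) K i /\
                    generated_subgroup mul inv one S = setT.

End GroupSide.

Definition is_action {d : measure_display} {X : measurableType d} {R : realType}
    {G : topologicalType} (mul : G -> G -> G) (mu : set X -> \bar R)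
    (T : G -> X -> X) : Prop :=
  [/\ (forall g, is_mpt mu (T g)),
      (forall g h, mu.-negligible [set x | T g (T h x) <> T (mul g h) x]) &
      (forall A B : set X, measurable A -> measurable B ->
         continuous (fun g => fine (mu (T g @` A `&` B))))].

Definition dGmet {d : measure_display} {X : measurableType d} {R : realType}
    {G : topologicalType} (mu : set X -> \bar R) (Afam : nat -> set X)
    (N : option nat) (K : nat -> set G) (T S : G -> X -> X) : \bar R :=
  \sum_(i <oo | in_range N i)
    (((2%:R : R)^-1 ^+ i.+1)%:E *
      ereal_sup [set dmet mu Afam (T g) (S g) | g in K i])%E.

Definition aGmet {d : measure_display} {X : measurableType d} {R : realType}
    {G : topologicalType} (mu : set X -> \bar R) (Afam : nat -> set X)
    (N : option nat) (K : nat -> set G) (T S : G -> X -> X) : \bar R :=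
  \sum_(i <oo | in_range N i)
    (((2%:R : R)^-1 ^+ i.+1)%:E *
      ereal_sup [set amet mu Afam (T g) (S g) | g in K i])%E.

(* Main.v *)
Require Import Defs.
From HB Require Import structures.
From mathcomp Require Import all_boot all_order all_algebra.
From mathcomp Require Import all_classical all_reals all_analysis.
From mathcomp Require Import lra ring.
Import Order.TTheory GRing.Theory Num.Theory.
Import numFieldNormedType.Exports.
Local Open Scope classical_set_scope.
Local Open Scope ring_scope.

Section Meas.
Variables (d : measure_display) (X : measurableType d) (R : realType) (mu : probability X R).

Definition mm (A : set X) : R := fine (mu A).

Lemma mmE A : measurable A -> mu A = (mm A)%:E.
Proof. by move=> mA; rewrite /mm fineK // fin_num_measure. Qed.

Lemma mm_ge0 A : 0 <= mm A.
Proof. by rewrite /mm fine_ge0. Qed.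

Lemma mm_le1 A : measurable A -> mm A <= 1.
Proof. by move=> mA; rewrite -lee_fin -mmE // probability_le1. Qed.

Lemma mm_le A B : measurable A -> measurable B -> A `<=` B -> mm A <= mm B.
Proof. by move=> mA mB AB; rewrite -lee_fin -!mmE // le_measure // inE. Qed.

Lemma mmU2 A B : measurable A -> measurable B -> mm (A `|` B) <= mm A + mm B.
Proof.
by move=> mA mB; rewrite -lee_fin EFinD -!mmE ?measureU2 //; exact: measurableU.
Qed.

Lemma mmU A B : measurable A -> measurable B -> A `&` B = set0 ->
  mm (A `|` B) = mm A + mm B.
Proof.
move=> mA mB AB; apply/eqP; rewrite -(@eqe R) EFinD -!mmE ?measureU //.
exact: measurableU.
Qed.

Lemma mmD A B : measurable A -> measurable B -> mm (A `\` B) = mm A - mm (A `&` B).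
Proof.
move=> mA mB; apply/eqP; rewrite -(@eqe R) EFinB -!mmE //; try exact: measurableI; try exact: measurableD.
by rewrite measureD // ltey_eq fin_num_measure.
Qed.

Lemma mm_symdiff A B : measurable A -> measurable B ->
  mm (Defs.symdiff A B) = mm (A `\` B) + mm (B `\` A).
Proof.
move=> mA mB; rewrite /Defs.symdiff mmU //; try exact: measurableD.
by apply/seteqP; split=> x //= [[? ?] []].
Qed.

Lemma mm_sdE A B : measurable A -> measurable B ->
  mm (Defs.symdiff A B) = mm A + mm B - 2 * mm (A `&` B).
Proof.
move=> mA mB; rewrite mm_symdiff // !mmD // setIC; lra.
Qed.

Lemma key_sd P Q B (eta c : R) : measurable P -> measurable Q -> measurable B ->
  mm P = mm Q -> mm (Defs.symdiff P B) < eta ->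
  `|mm (P `&` B) - mm (Q `&` B)| < c -> mm (Defs.symdiff P Q) < 2 * (eta + c).
Proof.
move=> mP mQ mB ePQ hPB hc.
have h1 : mm (Q `\` P) <= mm (Q `\` B) + mm (B `\` P).
  apply: le_trans; last by apply: mmU2; exact: measurableD.
  apply: mm_le; [exact: measurableD| |].
    by apply: measurableU; exact: measurableD.
  by move=> x [Qx Px]; have [Bx|Bx] := pselect (B x); [right|left].
move: hPB h1; rewrite !mm_symdiff // !mmD // (setIC B P) (setIC Q P).
move: hc; rewrite ltr_norml => /andP[hc1 hc2]; lra.
Qed.

Lemma inter_sd P Q B : measurable P -> measurable Q -> measurable B ->
  `|mm (P `&` B) - mm (Q `&` B)| <= mm (Defs.symdiff P Q).
Proof.
move=> mP mQ mB.
have h1 : mm (P `&` B) <= mm (Q `&` B) + mm (P `\` Q).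
  apply: le_trans; last by apply: mmU2; [exact: measurableI|exact: measurableD].
  apply: mm_le; [exact: measurableI| |].
    by apply: measurableU; [exact: measurableI|exact: measurableD].
  by move=> x [Px Bx]; have [Qx|Qx] := pselect (Q x); [left|right].
have h2 : mm (Q `&` B) <= mm (P `&` B) + mm (Q `\` P).
  apply: le_trans; last by apply: mmU2; [exact: measurableI|exact: measurableD].
  apply: mm_le; [exact: measurableI| |].
    by apply: measurableU; [exact: measurableI|exact: measurableD].
  by move=> x [Px Bx]; have [Qx|Qx] := pselect (P x); [left|right].
have h3 := mm_ge0 (P `\` Q); have h4 := mm_ge0 (Q `\` P).
rewrite mm_symdiff // ler_norml; apply/andP; split; lra.
Qed.

Section Mpt.
Variable T : X -> X.
Hypothesis hT : is_mpt mu T.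

Lemma mpt_pre_meas A : measurable A -> measurable (T @^-1` A).
Proof. by move=> mA; case: hT => mT _; rewrite -[_ @^-1` _]setTI; apply: mT. Qed.

Lemma mpt_imgE : exists Ti : X -> X, forall A, T @` A = Ti @^-1` A.
Proof.
case: hT => _ [Ti [_ TK TiK _]]; exists Ti => A.
apply/seteqP; split=> x /=.
  by case=> y Ay <-; rewrite TK.
by move=> Ax; exists (Ti x) => //; rewrite TiK.
Qed.

Lemma mpt_img_meas A : measurable A -> measurable (T @` A).
Proof.
case: hT => _ [Ti [mTi TK TiK _]] mA.
have -> : T @` A = Ti @^-1` A.
  apply/seteqP; split=> x /=.
    by case=> y Ay <-; rewrite TK.
  by move=> Ax; exists (Ti x) => //; rewrite TiK.
by rewrite -[_ @^-1` _]setTI; apply: mTi.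
Qed.

Lemma mpt_mm_pre A : measurable A -> mm (T @^-1` A) = mm A.
Proof. by case: hT => _ [Ti [_ _ _ h]] mA; rewrite /mm h. Qed.

Lemma mpt_inj : injective T.
Proof. by case: hT => _ [Ti [_ TK _ _]]; exact: can_inj TK. Qed.

Lemma mpt_mm_img A : measurable A -> mm (T @` A) = mm A.
Proof.
move=> mA; rewrite -mpt_mm_pre; last exact: mpt_img_meas.
congr mm; apply/seteqP; split=> x /=; last by move=> Ax; exists x.
by case=> y Ay /mpt_inj <-.
Qed.

Lemma mpt_preI A B : measurable A -> measurable B ->
  mm (T @^-1` A `&` B) = mm (T @` B `&` A).
Proof.
move=> mA mB; rewrite -(@mpt_mm_pre (T @` B `&` A)); last by apply: measurableI => //; exact: mpt_img_meas.
congr mm; apply/seteqP; split=> x /=.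
  by case=> Ax Bx; split=> //; exists x.
by case=> -[y By] /mpt_inj yx Ax; rewrite -yx; split => //; rewrite yx.
Qed.
End Mpt.
End Meas.
Arguments mmE {d X R mu}.
Arguments mm_ge0 {d X R mu}.
Arguments mm_le1 {d X R mu}.
Arguments mm_le {d X R mu}.
Arguments mmU2 {d X R mu}.
Arguments mmU {d X R mu}.
Arguments mmD {d X R mu}.
Arguments mm_symdiff {d X R mu}.
Arguments mm_sdE {d X R mu}.
Arguments key_sd {d X R mu}.
Arguments inter_sd {d X R mu}.
Arguments mpt_pre_meas {d X R mu T}.
Arguments mpt_imgE {d X R mu T}.
Arguments mpt_img_meas {d X R mu T}.
Arguments mpt_mm_pre {d X R mu T}.
Arguments mpt_inj {d X R mu T}.
Arguments mpt_mm_img {d X R mu T}.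
Arguments mpt_preI {d X R mu T}.
Section Ser.
Variable R : realType.
Local Notation hw k := ((2%:R : R)^-1 ^+ k).

Lemma hw_ge0 k : 0 <= hw k.
Proof. by rewrite exprn_ge0 // invr_ge0. Qed.

Lemma geo_sum m n : (m <= n)%N -> \sum_(m <= k < n) hw k.+1 = hw m - hw n.
Proof.
elim: n => [|n IH]; first by rewrite leqn0 => /eqP ->; rewrite big_geq // subrr.
rewrite leq_eqVlt => /orP[/eqP ->|]; first by rewrite big_geq // subrr.
rewrite ltnS => mn; rewrite big_nat_recr //= IH // !exprS; lra.
Qed.

Lemma tail_sum L n : \sum_(0 <= k < n) (if (L <= k)%N then hw k.+1 else 0) <= hw L.
Proof.
case: (leqP n L) => h.
  rewrite big_nat_cond big1 ?hw_ge0 // => k /andP[/andP[_ kn] _].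
  by rewrite ifF //; apply/negbTE; rewrite -ltnNge; exact: leq_trans kn h.
rewrite (@big_cat_nat _ _ _ L) /= ?(ltnW h) //.
rewrite [X in X + _]big_nat_cond big1 ?add0r; last first.
  by move=> k /andP[/andP[_ kn] _]; rewrite ifF //; apply/negbTE; rewrite -ltnNge.
rewrite big_nat_cond (eq_bigr (fun k => hw k.+1)); last first.
  by move=> k /andP[/andP[Lk _] _]; rewrite Lk.
rewrite -big_nat_cond geo_sum ?(ltnW h) //; have := hw_ge0 n; lra.
Qed.

Lemma wseries_le (P : pred nat) (x : nat -> \bar R) (L : nat) (c B : R) :
  0 <= c -> 0 <= B ->
  (forall k, P k -> (0 <= x k)%E) -> (forall k, P k -> (x k <= B%:E)%E) ->
  (forall k, P k -> (k < L)%N -> (x k <= c%:E)%E) ->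
  (\sum_(k <oo | P k) ((hw k.+1)%:E * x k) <= (c + B * hw L)%:E)%E.
Proof.
move=> c0 B0 x0 xB xc.
have t0 : forall k, P k -> (0 <= (hw k.+1)%:E * x k)%E.
  by move=> k Pk; rewrite mule_ge0 // ?x0 // lee_fin hw_ge0.
apply: lime_le; first by apply: is_cvg_nneseries => k _; exact: t0.
apply: filterE => n.
apply: (@le_trans _ _ (\sum_(0 <= k < n) (hw k.+1 * c + (if (L <= k)%N then hw k.+1 * B else 0))%:E)%E).
  rewrite big_mkcond /=; apply: lee_sum => k _.
  case: ifPn => Pk; last by rewrite lee_fin addr_ge0 ?mulr_ge0 ?hw_ge0 //; case: ifP => // _; rewrite mulr_ge0 ?hw_ge0.
  case: (leqP L k) => Lk.
    apply: (@le_trans _ _ ((hw k.+1)%:E * B%:E)%E); first by rewrite lee_pmul2l ?xB // lte_fin exprn_gt0 // invr_gt0.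
    by rewrite -EFinM lee_fin lerDr mulr_ge0 ?hw_ge0.
  apply: (@le_trans _ _ ((hw k.+1)%:E * c%:E)%E); first by rewrite lee_pmul2l ?xc // lte_fin exprn_gt0 // invr_gt0.
  by rewrite -EFinM lee_fin lerDl.
rewrite sumEFin lee_fin big_split /=.
have h1 : \sum_(0 <= k < n) hw k.+1 * c <= c.
  rewrite -big_distrl /= geo_sum // expr0; have := hw_ge0 n; nra.
have h2 : \sum_(0 <= k < n) (if (L <= k)%N then hw k.+1 * B else 0) <= B * hw L.
  rewrite (eq_bigr (fun k => (if (L <= k)%N then hw k.+1 else 0) * B)); last first.
    by move=> k _; case: ifP => //; rewrite mul0r.
  rewrite -big_distrl /= mulrC; apply: ler_wpM2l => //; exact: tail_sum.
lra.
Qed.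

Lemma term_le_series (P : pred nat) (f : nat -> \bar R) k :
  (forall n, P n -> (0 <= f n)%E) -> P k -> (f k <= \sum_(i <oo | P i) f i)%E.
Proof.
move=> f0 Pk.
apply: le_trans; last exact: (@nneseries_lim_ge _ f P 0 k.+1 (fun n _ => f0 n)).
rewrite big_mkcond big_nat_recr //= Pk leeDr // sume_ge0 // => i _.
by case: ifP => // /f0.
Qed.

Lemma hw_small (e : R) : 0 < e -> exists n, hw n <= e.
Proof.
move=> e0.
have : geometric 1 (2^-1 : R) x @[x --> \oo] --> (0:R).
  apply: cvg_geometric; rewrite ger0_norm ?invr_ge0 // invf_lt1 //; lra.
move/cvgrPdist_lt => /(_ e e0) [n _ /(_ n (leqnn n))].
rewrite sub0r normrN ger0_norm /=; last by rewrite mul1r exprn_ge0 // invr_ge0.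
by rewrite mul1r => /ltW h; exists n.
Qed.

Lemma compact_bound (G : topologicalType) (K : set G) (phi : nat -> G -> R) (t : nat -> R) :
  compact K -> (forall j, continuous (phi j)) ->
  (forall g, K g -> exists j, t j < phi j g) ->
  exists J, forall g, K g -> exists2 j, (j < J)%N & t j < phi j g.
Proof.
move=> /compact_near_coveringP cK cphi hK.
have : \forall J \near \oo, K `<=` (fun g => exists2 j, (j < J)%N & t j < phi j g).
  apply: (cK nat \oo (fun J g => exists2 j, (j < J)%N & t j < phi j g)) => g /hK [j hj].
  have hU : nbhs g (phi j @^-1` [set x | t j < x]).
    apply: open_nbhs_nbhs; split => //.
    by move/continuousP: (cphi j); apply; exact: open_gt.
  exists (phi j @^-1` [set x | t j < x], [set J | (j < J)%N]) => //=.
    by split => //; exists j.+1.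
  by move=> [g' J] /= [h1 h2]; exists j.
by move=> [J _ hJ]; exists J => g Kg; exact: (hJ J (leqnn J) g Kg).
Qed.
End Ser.

Lemma ex_bound1 (Q : nat -> nat -> Prop) L :
  (forall k J J', (J <= J')%N -> Q k J -> Q k J') ->
  (forall k, (k < L)%N -> exists J, Q k J) -> exists J, forall k, (k < L)%N -> Q k J.
Proof.
move=> mono; elim: L => [|L IH] h; first by exists 0%N.
have [J1 hJ1] := IH (fun k kL => h k (ltnW kL)).
have [J2 hJ2] := h L (ltnSn L).
exists (maxn J1 J2) => k; rewrite ltnS leq_eqVlt => /orP[/eqP ->|kL].
  by apply: mono hJ2; exact: leq_maxr.
by apply: mono (hJ1 k kL); exact: leq_maxl.
Qed.

Lemma ex_bound2 (P : nat -> nat -> nat -> Prop) L I :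
  (forall k i J J', (J <= J')%N -> P k i J -> P k i J') ->
  (forall k i, (k < L)%N -> (i < I)%N -> exists J, P k i J) ->
  exists J, forall k i, (k < L)%N -> (i < I)%N -> P k i J.
Proof.
move=> mono h.
have [|k kL|J hJ] := (@ex_bound1 (fun k J => forall i, (i < I)%N -> P k i J) L).
- by move=> k J J' JJ' hk i iI; apply: mono JJ' (hk i iI).
- apply: ex_bound1 => [i J J'|i iI]; first exact: mono.
  exact: h.
- by exists J => k i kL iI; apply: hJ.
Qed.

Section Met.
Variables (d : measure_display) (X : measurableType d) (R : realType) (mu : probability X R).
Variable Afam : nat -> set X.
Hypothesis hA : forall i, measurable (Afam i).
Local Notation hw k := ((2%:R : R)^-1 ^+ k).
Local Notation mm := (@mm _ _ _ mu).

Lemma sd_meas (A B : set X) : measurable A -> measurable B -> measurable (symdiff A B).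
Proof. by move=> mA mB; apply: measurableU; exact: measurableD. Qed.

Lemma imgA U i : is_mpt mu U -> measurable (U @` Afam i).
Proof. by move=> hU; exact: (mpt_img_meas hU _ (hA i)). Qed.
Lemma preA U i : is_mpt mu U -> measurable (U @^-1` Afam i).
Proof. by move=> hU; exact: (mpt_pre_meas hU _ (hA i)). Qed.
Lemma sdimg U V i : is_mpt mu U -> is_mpt mu V -> measurable (symdiff (U @` Afam i) (V @` Afam i)).
Proof. by move=> hU hV; apply: sd_meas; exact: imgA. Qed.
Lemma sdpre U V i : is_mpt mu U -> is_mpt mu V -> measurable (symdiff (U @^-1` Afam i) (V @^-1` Afam i)).
Proof. by move=> hU hV; apply: sd_meas; exact: preA. Qed.

Lemma dterm_E U V i : is_mpt mu U -> is_mpt mu V ->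
  (mu (symdiff (U @` Afam i) (V @` Afam i)) + mu (symdiff (U @^-1` Afam i) (V @^-1` Afam i)) =
   (mm (symdiff (U @` Afam i) (V @` Afam i)) + mm (symdiff (U @^-1` Afam i) (V @^-1` Afam i)))%:E)%E.
Proof.
move=> hU hV; rewrite EFinD -!mmE //; by first [exact: sdimg | exact: sdpre].
Qed.

Lemma dmet_le U V I (c : R) : is_mpt mu U -> is_mpt mu V -> 0 <= c ->
  (forall i, (i < I)%N -> mm (symdiff (U @` Afam i) (V @` Afam i)) +
     mm (symdiff (U @^-1` Afam i) (V @^-1` Afam i)) <= c) ->
  (dmet mu Afam U V <= (c + 2 * hw I)%:E)%E.
Proof.
move=> hU hV c0 hc; rewrite /dmet.
apply: wseries_le => //= k _; rewrite dterm_E // ?lee_fin.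
- by rewrite addr_ge0 // mm_ge0.
- by apply: lerD; apply: mm_le1; first [exact: sdimg | exact: sdpre].
- exact: hc.
Qed.

Lemma dmet_ge0 U V : (0 <= dmet mu Afam U V)%E.
Proof.
by apply: nneseries_ge0 => n _ _; rewrite mule_ge0 ?adde_ge0 // lee_fin hw_ge0.
Qed.

Lemma imgI U i j : is_mpt mu U -> measurable (U @` Afam i `&` Afam j).
Proof. by move=> hU; apply: measurableI => //; exact: imgA. Qed.

Lemma amet_E U V : is_mpt mu U -> is_mpt mu V ->
  amet mu Afam U V = (\sum_(i <oo) \sum_(j <oo)
    ((hw j.+1)%:E * (hw i.+1 * `|mm (U @` Afam i `&` Afam j) - mm (V @` Afam i `&` Afam j)|)%:E))%E.
Proof.
move=> hU hV; rewrite /amet; apply: eq_eseriesr => i _; apply: eq_eseriesr => j _.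
rewrite (mmE _ (imgI U i j hU)) (mmE _ (imgI V i j hV)) -EFinB abse_EFin -EFinM exprD; congr (_%:E); ring.
Qed.

Lemma amet_ge0 U V : is_mpt mu U -> is_mpt mu V -> (0 <= amet mu Afam U V)%E.
Proof.
move=> hU hV; rewrite amet_E //; apply: nneseries_ge0 => i _ _.
apply: nneseries_ge0 => j _ _.
by rewrite -EFinM lee_fin !mulr_ge0 ?hw_ge0.
Qed.

Lemma amet_extract U V p q : is_mpt mu U -> is_mpt mu V ->
  ((hw p.+1 * hw q.+1 * `|mm (U @` Afam p `&` Afam q) - mm (V @` Afam p `&` Afam q)|)%:E
    <= amet mu Afam U V)%E.
Proof.
move=> hU hV; rewrite amet_E //.
set F := fun i j => ((hw j.+1)%:E * (hw i.+1 * `|mm (U @` Afam i `&` Afam j) - mm (V @` Afam i `&` Afam j)|)%:E)%E.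
rewrite -/(\sum_(i <oo) \sum_(j <oo) F i j)%E.
have F0 : forall i j, (0 <= F i j)%E.
  by move=> i j; rewrite /F -EFinM lee_fin !mulr_ge0 ?hw_ge0.
apply: le_trans; last first.
  apply: (@term_le_series _ xpredT (fun i => \sum_(j <oo) F i j)%E p) => // i _.
  by apply: nneseries_ge0 => j _ _.
apply: le_trans; last by apply: (@term_le_series _ xpredT (F p) q) => // j _.
by rewrite /F -EFinM lee_fin; rewrite mulrCA mulrA.
Qed.

Lemma amet_le_dmet U V : is_mpt mu U -> is_mpt mu V ->
  (amet mu Afam U V <= dmet mu Afam U V)%E.
Proof.
move=> hU hV; rewrite amet_E // /dmet; apply: lee_nneseries => [i _ _|i _].
  by apply: nneseries_ge0 => j _ _; rewrite -EFinM lee_fin !mulr_ge0 ?hw_ge0.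
rewrite dterm_E //.
apply: le_trans.
  apply: (@wseries_le _ xpredT _ 0 0 (hw i.+1 * mm (symdiff (U @` Afam i) (V @` Afam i)))).
  - by [].
  - by rewrite mulr_ge0 ?hw_ge0 ?mm_ge0.
  - by move=> j _; rewrite lee_fin mulr_ge0 ?hw_ge0.
  - move=> j _; rewrite lee_fin ler_wpM2l ?hw_ge0 //.
    by apply: inter_sd => //; exact: imgA.
  - by [].
by rewrite expr0 mulr1 add0r -EFinM lee_fin ler_wpM2l ?hw_ge0 // lerDl mm_ge0.
Qed.
End Met.

Section Final.
Variables (d : measure_display) (X : measurableType d) (R : realType) (mu : probability X R).
Variable Afam : nat -> set X.
Hypothesis hA : forall i, measurable (Afam i).
Variables (G : topologicalType) (mul : G -> G -> G) (N : option nat) (K : nat -> set G).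
Hypothesis hKne : forall k, in_range N k -> K k !=set0.
Local Notation hw k := ((2%:R : R)^-1 ^+ k).
Local Notation mm := (@mm _ _ _ mu).

Lemma hw_anti a b : (a <= b)%N -> hw b <= hw a.
Proof.
move=> ab; have h0 : 0 <= (2%:R : R)^-1 by rewrite invr_ge0.
have h1 : (2%:R : R)^-1 <= 1 by rewrite invf_le1 //; lra.
exact: (ler_wiXn2l h0 h1 ab).
Qed.

Lemma act_mpt T : is_action mul mu T -> forall g, is_mpt mu (T g).
Proof. by case. Qed.

Lemma supA_ge0 T S k : is_action mul mu T -> is_action mul mu S -> in_range N k ->
  (0 <= ereal_sup [set amet mu Afam (T g) (S g) | g in K k])%E.
Proof.
move=> hT hS Pk; have [g Kg] := hKne k Pk.
apply: le_trans; last by apply: ereal_sup_ubound; exists g.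
by apply: amet_ge0 => //; exact: act_mpt.
Qed.

Lemma supD_ge0 T S k : in_range N k ->
  (0 <= ereal_sup [set dmet mu Afam (T g) (S g) | g in K k])%E.
Proof.
move=> Pk; have [g Kg] := hKne k Pk.
apply: le_trans; last by apply: ereal_sup_ubound; exists g.
exact: dmet_ge0.
Qed.

Lemma dir2 T S : is_action mul mu T -> is_action mul mu S ->
  (aGmet mu Afam N K T S <= dGmet mu Afam N K T S)%E.
Proof.
move=> hT hS; rewrite /aGmet /dGmet; apply: lee_nneseries => [i _ Pi|i Pi].
  by rewrite mule_ge0 ?lee_fin ?hw_ge0 // supA_ge0.
apply: lee_wpmul2l; first by rewrite lee_fin hw_ge0.
apply: ge_ereal_sup => _ [g Kg <-].
apply: le_trans; first by apply: amet_le_dmet => //; exact: act_mpt.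
by apply: ereal_sup_ubound; exists g.
Qed.

Lemma extract T S (c : R) L M k g p q : is_action mul mu T -> is_action mul mu S ->
  (aGmet mu Afam N K T S < (c * hw (L + (M + M)))%:E)%E ->
  in_range N k -> (k < L)%N -> K k g -> (p < M)%N -> (q < M)%N ->
  `|mm (T g @` Afam p `&` Afam q) - mm (S g @` Afam p `&` Afam q)| < c.
Proof.
move=> hT hS haG Pk kL Kg pM qM.
set x := `|_ - _|.
have h1 : ((hw k.+1)%:E * amet mu Afam (T g) (S g) <= aGmet mu Afam N K T S)%E.
  apply: le_trans; last first.
    apply: (@term_le_series _ (in_range N) _ k) => // i Pi.
    by rewrite mule_ge0 ?lee_fin ?hw_ge0 // supA_ge0.
  apply: lee_wpmul2l; first by rewrite lee_fin hw_ge0.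
  by apply: ereal_sup_ubound; exists g.
have h2 := @amet_extract _ _ _ mu Afam hA (T g) (S g) p q (@act_mpt _ hT g) (@act_mpt _ hS g).
have h3 : ((hw k.+1 * (hw p.+1 * hw q.+1 * x))%:E < (c * hw (L + (M + M)))%:E)%E.
  apply: le_lt_trans haG; apply: le_trans h1; rewrite EFinM.
  by apply: lee_wpmul2l => //; rewrite lee_fin hw_ge0.
move: h3; rewrite lte_fin !exprD => h3.
have x0 : 0 <= x by rewrite /x normr_ge0.
have a1 : hw L <= hw k.+1 by apply: hw_anti.
have a2 : hw M <= hw p.+1 by apply: hw_anti.
have a3 : hw M <= hw q.+1 by apply: hw_anti.
have P0 : 0 < hw L * (hw M * hw M).
  by rewrite !mulr_gt0 // exprn_gt0 // invr_gt0.
have h4 : hw L * (hw M * hw M) * x <= hw k.+1 * (hw p.+1 * hw q.+1 * x).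
  have hb : hw L * (hw M * hw M) <= hw k.+1 * (hw p.+1 * hw q.+1).
    apply: ler_pM; rewrite ?mulr_ge0 ?hw_ge0 //; apply: ler_pM; rewrite ?hw_ge0 //.
  by rewrite [X in _ <= X]mulrA; apply: ler_wpM2r.
rewrite -(ltr_pM2l P0); apply: (le_lt_trans h4); rewrite [X in _ < X]mulrC.
exact: h3.
Qed.

Hypothesis hdense : forall (B : set X) (eps : R), measurable B -> 0 < eps ->
  exists i, (mu (symdiff (Afam i) B) < eps%:E)%E.

Lemma cover_J T k i (eta : R) : is_action mul mu T -> compact (K k) -> 0 < eta ->
  exists J, forall g, K k g ->
    (exists2 j, (j < J)%N & mm (symdiff (T g @` Afam i) (Afam j)) < eta) /\
    (exists2 j, (j < J)%N & mm (symdiff (T g @^-1` Afam i) (Afam j)) < eta).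
Proof.
move=> hT hK eta0.
have hc : forall A B, measurable A -> measurable B ->
    continuous (fun g => mm (T g @` A `&` B)).
  by case: hT => _ _ hc A B mA mB; exact: hc.
have mT := @act_mpt _ hT.
set t := fun j => (mm (Afam i) + mm (Afam j) - eta) / 2.
have d1 : forall g, K k g -> exists j, t j < mm (T g @` Afam i `&` Afam j).
  move=> g Kg.
  have mP : measurable (T g @` Afam i) by exact: (mpt_img_meas (mT g) _ (hA i)).
  have [j hj] := hdense _ _ mP eta0; exists j.
  move: hj; rewrite (mmE _ (@sd_meas _ _ _ _ (hA j) mP)) lte_fin mm_sdE // (mpt_mm_img (mT g) _ (hA i)).
  by rewrite setIC /t; lra.
have [J1 hJ1] := @compact_bound R G (K k) (fun j g => mm (T g @` Afam i `&` Afam j)) t hK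
   (fun j => hc _ _ (hA i) (hA j)) d1.
have d2 : forall g, K k g -> exists j, t j < mm (T g @` Afam j `&` Afam i).
  move=> g Kg.
  have mP : measurable (T g @^-1` Afam i) by exact: (mpt_pre_meas (mT g) _ (hA i)).
  have [j hj] := hdense _ _ mP eta0; exists j.
  move: hj; rewrite (mmE _ (@sd_meas _ _ _ _ (hA j) mP)) lte_fin mm_sdE // (mpt_mm_pre (mT g) _ (hA i)).
  by rewrite setIC (mpt_preI (mT g) _ _ (hA i) (hA j)) /t; lra.
have [J2 hJ2] := @compact_bound R G (K k) (fun j g => mm (T g @` Afam j `&` Afam i)) t hK
   (fun j => hc _ _ (hA j) (hA i)) d2.
exists (maxn J1 J2) => g Kg; split.
  have [j jJ hj] := hJ1 g Kg; exists j; first exact: (leq_trans jJ (leq_maxl _ _)).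
  have mP : measurable (T g @` Afam i) by exact: (mpt_img_meas (mT g) _ (hA i)).
  move: hj; rewrite mm_sdE // (mpt_mm_img (mT g) _ (hA i)) /t; lra.
have [j jJ hj] := hJ2 g Kg; exists j; first exact: (leq_trans jJ (leq_maxr _ _)).
have mP : measurable (T g @^-1` Afam i) by exact: (mpt_pre_meas (mT g) _ (hA i)).
move: hj; rewrite mm_sdE // (mpt_mm_pre (mT g) _ (hA i)) (mpt_preI (mT g) _ _ (hA i) (hA j)) /t; lra.
Qed.

Hypothesis hKc : forall k, in_range N k -> compact (K k).

Lemma dir1 T (eps : R) : is_action mul mu T -> 0 < eps ->
  exists2 delta : R, 0 < delta & forall S, is_action mul mu S ->
    (aGmet mu Afam N K T S < delta%:E)%E -> (dGmet mu Afam N K T S < eps%:E)%E.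
Proof.
move=> hT e0.
set eta := eps / 64.
have eta0 : 0 < eta by rewrite /eta; lra.
have [I hI] := @hw_small R (eps / 16) ltac:(lra).
have [L hL] := @hw_small R (eps / 8) ltac:(lra).
set PP := fun k i J => in_range N k -> forall g, K k g ->
    (exists2 j, (j < J)%N & mm (symdiff (T g @` Afam i) (Afam j)) < eta) /\
    (exists2 j, (j < J)%N & mm (symdiff (T g @^-1` Afam i) (Afam j)) < eta).
have mono : forall k i J J', (J <= J')%N -> PP k i J -> PP k i J'.
  move=> k i J J' JJ' h Pk g Kg; have [[j jJ hj] [j' jJ' hj']] := h Pk g Kg.
  by split; [exists j|exists j'] => //; apply: leq_trans JJ'.
have ex : forall k i, (k < L)%N -> (i < I)%N -> exists J, PP k i J.
  move=> k i kL iI; case: (boolP (in_range N k)) => Pk.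
    have [J hJ] := @cover_J T k i eta hT (hKc k Pk) eta0.
    by exists J => _; exact: hJ.
  by exists 0%N => Pk'; move: Pk; rewrite Pk'.
have [J hJ] := @ex_bound2 PP L I mono ex.
set M := maxn I J.
exists (eta * hw (L + (M + M))); first by rewrite mulr_gt0 // exprn_gt0 // invr_gt0.
move=> S hS haG.
have mT := @act_mpt _ hT; have mS := @act_mpt _ hS.
have hx : forall k g p q, in_range N k -> (k < L)%N -> K k g -> (p < M)%N -> (q < M)%N ->
    `|mm (T g @` Afam p `&` Afam q) - mm (S g @` Afam p `&` Afam q)| < eta.
  by move=> k g p q Pk kL Kg pM qM; exact: (@extract T S eta L M k g p q hT hS haG Pk kL Kg pM qM).
apply: le_lt_trans.
  apply: (@wseries_le R (in_range N)
    (fun k => ereal_sup [set dmet mu Afam (T g) (S g) | g in K k]) L (eps / 4) 2).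
  - by rewrite divr_ge0 // ltW.
  - by [].
  - by move=> k Pk; exact: supD_ge0.
  - move=> k Pk; apply: ge_ereal_sup => _ [g Kg <-].
    apply: le_trans.
      by apply: (@dmet_le _ _ _ mu Afam hA (T g) (S g) 0 0 (mT g) (mS g)).
    by rewrite expr0 mulr1 add0r.
  - move=> k Pk kL; apply: ge_ereal_sup => _ [g Kg <-].
    apply: le_trans.
      apply: (@dmet_le _ _ _ mu Afam hA (T g) (S g) I (eps / 8) (mT g) (mS g)).
        by rewrite divr_ge0 // ltW.
      move=> i iI; have [[j jJ hj] [j' jJ' hj']] := hJ k i kL iI Pk g Kg.
      have iM : (i < M)%N by apply: leq_trans iI (leq_maxl _ _).
      have jM : (j < M)%N by apply: leq_trans jJ (leq_maxr _ _).
      have jM' : (j' < M)%N by apply: leq_trans jJ' (leq_maxr _ _).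
      have h1 : mm (symdiff (T g @` Afam i) (S g @` Afam i)) < 2 * (eta + eta).
        apply: (@key_sd _ _ _ mu _ _ (Afam j) eta eta) => //.
        - exact: (mpt_img_meas (mT g) _ (hA i)).
        - exact: (mpt_img_meas (mS g) _ (hA i)).
        - by rewrite (mpt_mm_img (mT g) _ (hA i)) (mpt_mm_img (mS g) _ (hA i)).
        - exact: (hx k g i j Pk kL Kg iM jM).
      have h2 : mm (symdiff (T g @^-1` Afam i) (S g @^-1` Afam i)) < 2 * (eta + eta).
        apply: (@key_sd _ _ _ mu _ _ (Afam j') eta eta) => //.
        - exact: (mpt_pre_meas (mT g) _ (hA i)).
        - exact: (mpt_pre_meas (mS g) _ (hA i)).
        - by rewrite (mpt_mm_pre (mT g) _ (hA i)) (mpt_mm_pre (mS g) _ (hA i)).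
        - rewrite (mpt_preI (mT g) _ _ (hA i) (hA j')) (mpt_preI (mS g) _ _ (hA i) (hA j')).
          exact: (hx k g j' i Pk kL Kg jM' iM).
      rewrite /eta in h1 h2; lra.
    by rewrite lee_fin; lra.
by rewrite lte_fin; lra.
Qed.
End Final.

Theorem mainTheorem8
  (d : measure_display) (X : measurableType d) (R : realType)
  (mu : probability X R) (Afam : nat -> set X)
  (G : topologicalType) (mul : G -> G -> G) (inv : G -> G) (one : G)
  (N : option nat) (K : nat -> set G) :
  nonatomic mu -> lebesgue_space_iso mu -> generating_dense_family mu Afam ->
  is_topological_group mul inv one -> hausdorff_space G ->
  @is_locally_compact G -> @countable_nbhs_base G ->
  good_compact_family mul inv one N K ->
  (forall T : G -> X -> X, is_action mul mu T ->
     forall eps : R, 0 < eps -> exists2 delta : R, 0 < delta &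
       forall S : G -> X -> X, is_action mul mu S ->
         (aGmet mu Afam N K T S < delta%:E)%E -> (dGmet mu Afam N K T S < eps%:E)%E) /\
  (forall T : G -> X -> X, is_action mul mu T ->
     forall eps : R, 0 < eps -> exists2 delta : R, 0 < delta &
       forall S : G -> X -> X, is_action mul mu S ->
         (dGmet mu Afam N K T S < delta%:E)%E -> (aGmet mu Afam N K T S < eps%:E)%E).
Proof.
move=> _ _ [hA _ hdense] _ _ _ _ [hK _].
have hKc : forall k, in_range N k -> compact (K k) by move=> k Pk; case: (hK k Pk).
have hKne : forall k, in_range N k -> K k !=set0.
  move=> k Pk; case: (hK k Pk) => _ [g hg]; exists g; exact: interior_subset.
split.
  move=> T hT eps e0.
  exact: (@dir1 d X R mu Afam hA G mul N K hKne hdense hKc T eps hT e0).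
move=> T hT eps e0; exists eps => // S hS hd.
exact: le_lt_trans (@dir2 d X R mu Afam hA G mul N K hKne T S hT hS) hd.
Qed.
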